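(* Let $u\in U$, $w'\in W$, and let $y_1,\dots,y_N\in F$ and $\pi_1,\dots,\pi_{N+1}\in W$ be produced by the decomposition procedure below. Define $\sigma_{N+1}=w'$ and, for $k=N,\dots,1$, $\sigma_k=\sigma_{k+1}$ if step $k$ is of type A and $\sigma_k=s_{i_k}\sigma_{k+1}$ if step $k$ is of type B; equivalently \[ \sigma_k=\Big[\prod_{j=k}^{N}\begin{cases}1&\text{if step }j\text{ is of type A}\\ s_{i_j}&\text{if step }j\text{ is of type B}\end{cases}\Big]w' . \] Then for every $k=1,\dots,N+1$, as elements of $W$, \[ \pi_k=s_{i_N}s_{i_{N-1}}\cdots s_{i_k}\,\sigma_k , \] and in particular $\pi_1=w_0\sigma_1$.
   Context: Let $F$ be a non-archimedean local field with ring of integers $\mathcal{O}$, maximal ideal $\mathfrak{p}$, unit group $\mathcal{O}^\times$, residue field $\mathbb{F}_q$. Let $G$ be a split connected reductive group over $F$ with split maximal torus $T$, irreducible root system $\Phi$, positive roots $\Phi^+$, $\Phi^-=-\Phi^+$, simple roots $\alpha_i$, coroots $\alpha^\vee$, Weyl group $W$ with simple reflections $s_i$ acting on $\Phi$. Let $n\ge1$ with $q\equiv1\pmod{2n}$ and $\widetilde G$ an $n$-fold metaplectic cover of $G(F)$ (central extension by $\mu_n$); $\widetilde H$ = preimage of $H$. The cover splits over $K=G(\mathcal{O})$ and unipotent subgroups. Steinberg generators $e_\alpha(x)$, $w_\alpha(x)=e_\alpha(x)e_{-\alpha}(-x^{-1})$, $h_\alpha(x)=w_\alpha(x)w_\alpha(-1)\in\widetilde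 T$, with $h_\alpha(x)e_\beta(y)h_\alpha(x)^{-1}=e_\beta(x^{\langle\beta,\alpha^\vee\rangle}y)$. $U^+$ (resp. $U=U^-$) is generated by $e_\alpha(x)$ (resp. $e_{-\alpha}(x)$), $\alpha\in\Phi^+$, $x\in F$. $J$ = preimage of $B^-(\mathbb{F}_q)$ under $G(\mathcal{O})\to G(\mathbb{F}_q)$. Weyl elements are identified with fixed representatives in $K$ ($s_i\leftrightarrow w_{\alpha_i}(-1)$; $s_\alpha=vs_iv^{-1}$ if $\alpha=v(\alpha_i)\in\Phi^+$). Fix a reduced word $w_0=s_{i_1}\cdots s_{i_N}$ of the longest element, $\gamma_j=s_{i_N}\cdots s_{i_{j+1}}(\alpha_{i_j})$, so $\Phi^+=\{\gamma_1,\dots,\gamma_N\}$. For $0\le k\le N$, $G_k$ = set of products $\big(\prod_{j=1}^{k-1}e_{-\gamma_j}(t_j)\big)\big(\prod_{j=k+1}^N e_{\gamma_j}(t_j)\big)$, $t_j\in F$. Fact: for $z\in F$, $g\in G_k$ there is a unique $g'\in G_k$ with $e_{-\gamma_k}(z)g=g'e_{-\gamma_k}(z)$. Decomposition procedure. Write $u=e_{-\gamma_1}(x_1)\cdots e_{-\gamma_N}(x_N)$ ($x_j\in F$ unique). Put $p_{N+1}=h_{N+1}=j_{N+1}=1$, $\pi_{N+1}=w'$, $t_N=0$. For $k=N,N-1,\dots,1$: the element $p_{k+1}$ has the form $e_{-\gamma_k}(t_k)p'_k$ with $t_k\in F$, $p'_k\in G_k$ uniquely determined; let $p''_k\in G_k$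 satisfy $e_{-\gamma_k}(x_k+t_k)p'_k=p''_ke_{-\gamma_k}(x_k+t_k)$; define $y_k\in F$ by $h_{k+1}^{-1}e_{-\gamma_k}(x_k+t_k)h_{k+1}=e_{-\gamma_k}(y_k)$. Step $k$ is of type A if $y_k\notin\mathcal{O}$, or $y_k\in\mathcal{O}^\times$ and $\pi_{k+1}^{-1}(\gamma_k)\in\Phi^-$; otherwise ($y_k\in\mathfrak{p}$, or $y_k\in\mathcal{O}^\times$ and $\pi_{k+1}^{-1}(\gamma_k)\in\Phi^+$) of type B. Type A: $h_k=h_{k+1}h_{\gamma_k}(y_k^{-1})$, $\pi_k=s_{\gamma_k}\pi_{k+1}$, $j_k=e_{\pi_{k+1}^{-1}(\gamma_k)}(y_k^{-1})j_{k+1}$, $p_k=p''_k\,h_ke_{\gamma_k}(y_k)h_k^{-1}$. Type B: $h_k=h_{k+1}$, $\pi_k=\pi_{k+1}$, $j_k=e_{-\pi_{k+1}^{-1}(\gamma_k)}(y_k)j_{k+1}$, $p_k=p''_k$. *)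

(* Defs.v *)
From mathcomp Require Import all_boot all_order all_algebra.
Set Implicit Arguments. Unset Strict Implicit. Unset Printing Implicit Defensive.
Import Order.TTheory GRing.Theory Num.Theory.
Local Open Scope ring_scope.

Section RootData.
Variables (R : realFieldType) (n r : nat).

Definition dotv (u v : 'cV[R]_n) : R := (u^T *m v) 0 0.

(* The reflection s_a : x |-> x - (2 (x,a)/(a,a)) a, as a matrix acting on
   column vectors on the left, so that group product = matrix product. *)
Definition refl (a : 'cV[R]_n) : 'M[R]_n :=
  1%:M - (2 / dotv a a) *: (a *m a^T).

Definition root_system (Phi : seq 'cV[R]_n) : Prop :=
  [/\ 0 \notin Phi,
      (forall a b, a \in Phi -> b \in Phi -> refl a *m b \in Phi),
      (forall a b, a \in Phi -> b \in Phi ->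
         exists z : int, 2 * dotv b a / dotv a a = z%:~R) &
      (forall a (c : R), a \in Phi -> c *: a \in Phi -> c = 1 \/ c = -1)].

Definition irreducible_rs (Phi : seq 'cV[R]_n) : Prop :=
  Phi <> [::] /\
  forall P : pred 'cV[R]_n,
    (forall a b, a \in Phi -> b \in Phi -> P a -> ~~ P b -> dotv a b = 0) ->
    all P Phi \/ all (predC P) Phi.

Definition is_base (Phi : seq 'cV[R]_n) (alpha : 'I_r -> 'cV[R]_n) : Prop :=
  [/\ (forall i, alpha i \in Phi),
      (forall c : 'I_r -> R, \sum_i c i *: alpha i = 0 -> forall i, c i = 0) &
      (forall b, b \in Phi -> exists c : 'I_r -> int,
          b = \sum_i (c i)%:~R *: alpha i /\
          ((forall i, 0 <= c i) \/ (forall i, c i <= 0)))].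

Definition posroot (Phi : seq 'cV[R]_n) (alpha : 'I_r -> 'cV[R]_n)
  (b : 'cV[R]_n) : Prop :=
  b \in Phi /\ exists c : 'I_r -> int,
    (forall i, 0 <= c i) /\ b = \sum_i (c i)%:~R *: alpha i.
Definition negroot Phi alpha (b : 'cV[R]_n) : Prop := posroot Phi alpha (- b).

Definition wordprod (alpha : 'I_r -> 'cV[R]_n) (s : seq 'I_r) : 'M[R]_n :=
  foldr (fun i M => refl (alpha i) *m M) 1%:M s.

Definition inW (alpha : 'I_r -> 'cV[R]_n) (w : 'M[R]_n) : Prop :=
  exists s : seq 'I_r, w = wordprod alpha s.

Definition w0_of (alpha : 'I_r -> 'cV[R]_n) (N : nat) (i : nat -> 'I_r) :=
  wordprod alpha [seq i j | j <- iota 1 N].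

(* i_1 ... i_N is a reduced word for the longest element of W:
   it is reduced (no shorter word gives the same element) and every element
   of W has length <= N (so w0 has maximal length). *)
Definition longest_reduced_word (alpha : 'I_r -> 'cV[R]_n) (N : nat)
  (i : nat -> 'I_r) : Prop :=
  (forall s, wordprod alpha s = w0_of alpha N i -> (N <= size s)%N) /\
  (forall w, inW alpha w -> exists s, (size s <= N)%N /\ w = wordprod alpha s).

(* s_{i_N} s_{i_{N-1}} ... s_{i_k}  (empty product = 1 when k = N+1). *)
Definition tailprod (alpha : 'I_r -> 'cV[R]_n) (N : nat) (i : nat -> 'I_r)
  (k : nat) : 'M[R]_n :=
  wordprod alpha [seq i j | j <- rev (iota k (N.+1 - k))].

Definition gamma (alpha : 'I_r -> 'cV[R]_n) (N : nat) (i : nat -> 'I_r)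
  (k : nat) : 'cV[R]_n :=
  tailprod alpha N i k.+1 *m alpha (i k).

End RootData.

(* Valuative class of the element y_k of F computed at step k of the
   decomposition procedure:  Yout : y_k \notin O ;  Yunit : y_k \in O^x ;
   Yp : y_k \in p. *)
Inductive ycls := Yout | Yunit | Yp.

Section Procedure.
Variables (R : realFieldType) (n r : nat).
Variables (Phi : seq 'cV[R]_n) (alpha : 'I_r -> 'cV[R]_n) (N : nat)
          (i : nat -> 'I_r) (c : nat -> ycls) (pi sigma : nat -> 'M[R]_n).

Definition typeA (k : nat) : Prop :=
  c k = Yout \/
  (c k = Yunit /\ negroot Phi alpha (invmx (pi k.+1) *m gamma alpha N i k)).
Definition typeB (k : nat) : Prop :=
  c k = Yp \/
  (c k = Yunit /\ posroot Phi alpha (invmx (pi k.+1) *m gamma alpha N i k)).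

(* The Weyl-group part of step k of the procedure, together with the
   definition of sigma_k. *)
Definition step_rel (k : nat) : Prop :=
  (typeA k -> pi k = refl (gamma alpha N i k) *m pi k.+1 /\
              sigma k = sigma k.+1) /\
  (typeB k -> pi k = pi k.+1 /\
              sigma k = refl (alpha (i k)) *m sigma k.+1).
End Procedure.

(* Main.v *)
Require Import Defs.
From mathcomp Require Import all_boot all_order all_algebra.
From mathcomp Require Import zify.
Set Implicit Arguments. Unset Strict Implicit. Unset Printing Implicit Defensive.
Import Order.TTheory GRing.Theory Num.Theory.
Local Open Scope ring_scope.

Section Aux.
Variables (R : realFieldType) (n : nat).
Implicit Types (a b : 'cV[R]_n) (T : 'M[R]_n).

Lemma trmx_dot a b : a^T *m b = (dotv a b)%:M.
Proof. by rewrite [LHS]mx11_scalar. Qed.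

Lemma dotvC a b : dotv a b = dotv b a.
Proof. by rewrite /dotv (_ : b^T *m a = (a^T *m b)^T) ?mxE // trmx_mul trmxK. Qed.

Lemma dotv_eq0 a : dotv a a = 0 -> a = 0.
Proof.
rewrite /dotv mxE => /eqP; rewrite psumr_eq0; last first.
  by move=> j _; rewrite mxE -expr2 sqr_ge0.
move=> /allP H; apply/matrixP => j k; rewrite ord1 mxE.
have := H j (mem_index_enum j); rewrite mxE -expr2 sqrf_eq0 => /eqP //.
Qed.

Lemma refl_mul a b : refl a *m b = b - (2 * dotv a b / dotv a a) *: a.
Proof.
rewrite /refl mulmxBl mul1mx -scalemxAl -mulmxA trmx_dot mul_mx_scalar.
by rewrite scalerA; congr (_ - _); congr (_ *: _); rewrite mulrAC.
Qed.

Lemma refl_self a : a != 0 -> refl a *m a = - a.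
Proof.
move=> a0; have d0 : dotv a a != 0 by apply/eqP => /dotv_eq0; apply/eqP.
rewrite refl_mul mulfK // scaler_nat; by rewrite mulr2n opprD addrA subrr add0r.
Qed.

Lemma refl_tr a : (refl a)^T = refl a.
Proof. by rewrite /refl linearB /= trmx1 linearZ /= trmx_mul trmxK. Qed.

Lemma refl_invol a : a != 0 -> refl a *m refl a = 1%:M.
Proof.
move=> a0; have d0 : dotv a a != 0 by apply/eqP => /dotv_eq0; apply/eqP.
set k := 2 / dotv a a.
have PP : a *m a^T *m (a *m a^T) = dotv a a *: (a *m a^T).
  by rewrite mulmxA -(mulmxA a) trmx_dot mul_mx_scalar scalemxAl.
rewrite /refl mulmxBl mul1mx mulmxBr mulmx1 -scalemxAl -scalemxAr PP !scalerA -/k.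
have -> : k * k * dotv a a = k + k by rewrite /k -mulrA mulfVK // mulr_natr mulr2n.
by rewrite scalerDl opprB addrK subrK.
Qed.
End Aux.

Section Aux2.
Variables (R : realFieldType) (n : nat).
Implicit Types (a b : 'cV[R]_n) (T : 'M[R]_n).

Lemma dotv_orth T a b : T^T *m T = 1%:M -> dotv (T *m a) (T *m b) = dotv a b.
Proof. by move=> H; rewrite /dotv trmx_mul -mulmxA (mulmxA T^T) H mul1mx. Qed.

Lemma refl_conj T a : T^T *m T = 1%:M -> refl (T *m a) = T *m refl a *m T^T.
Proof.
move=> H; have H' := mulmx1C H.
rewrite /refl dotv_orth // mulmxBr mulmx1 mulmxBl H' -scalemxAr -scalemxAl.
by rewrite trmx_mul !mulmxA.
Qed.

Variables (r : nat) (alpha : 'I_r -> 'cV[R]_n).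
Hypothesis anz : forall j, alpha j != 0.

Lemma wordprod_foldr s (M : 'M[R]_n) :
  foldr (fun i M => refl (alpha i) *m M) M s = wordprod alpha s *m M.
Proof. by elim: s => [|j s IH] /=; rewrite ?mul1mx // IH /wordprod mulmxA. Qed.

Lemma wordprod_cat s t : wordprod alpha (s ++ t) = wordprod alpha s *m wordprod alpha t.
Proof. by rewrite /wordprod foldr_cat wordprod_foldr. Qed.

Lemma wordprod_rcons s j : wordprod alpha (rcons s j) = wordprod alpha s *m refl (alpha j).
Proof. by rewrite -cats1 wordprod_cat /wordprod /= mulmx1. Qed.

Lemma wordprod_tr s : (wordprod alpha s)^T = wordprod alpha (rev s).
Proof.
elim: s => [|j s IH]; first by rewrite /wordprod /= trmx1.
by rewrite rev_cons wordprod_rcons -IH -refl_tr -trmx_mul.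
Qed.

Lemma wordprod_orth s : (wordprod alpha s)^T *m wordprod alpha s = 1%:M.
Proof.
elim: s => [|j s IH]; first by rewrite /wordprod /= trmx1 mulmx1.
rewrite [wordprod _ (_ :: _)]/wordprod /= -/(wordprod alpha s) trmx_mul refl_tr.
by rewrite mulmxA -(mulmxA _ (refl (alpha j)) (refl (alpha j))) refl_invol // mulmx1 IH.
Qed.

Lemma wordprod_rev_mul s : wordprod alpha (rev s) *m wordprod alpha s = 1%:M.
Proof. by rewrite -wordprod_tr wordprod_orth. Qed.

Lemma wordprod_mul_rev s : wordprod alpha s *m wordprod alpha (rev s) = 1%:M.
Proof. exact: mulmx1C (wordprod_rev_mul s). Qed.

Lemma invmx_wordprod s : invmx (wordprod alpha s) = wordprod alpha (rev s).
Proof.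
have [U _] := mulmx1_unit (wordprod_mul_rev s).
by rewrite -[RHS]mul1mx -(mulVmx U) -mulmxA wordprod_mul_rev mulmx1.
Qed.
End Aux2.

Section Roots.
Variables (R : realFieldType) (n r : nat).
Variables (Phi : seq 'cV[R]_n) (alpha : 'I_r -> 'cV[R]_n).
Hypothesis RS : root_system Phi.
Hypothesis BS : is_base Phi alpha.

Definition posR (v : 'cV[R]_n) :=
  exists c : 'I_r -> R, (forall k, 0 <= c k) /\ v = \sum_k c k *: alpha k.

Lemma notin0 b : b \in Phi -> b != 0.
Proof. by case: RS => H _ _ _ bP; apply/eqP => E; move: H; rewrite -E bP. Qed.

Lemma alpha_in j : alpha j \in Phi.
Proof. by case: BS. Qed.

Lemma anz j : alpha j != 0.
Proof. exact: notin0 (alpha_in j). Qed.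

Lemma refl_in a b : a \in Phi -> b \in Phi -> refl a *m b \in Phi.
Proof. by case: RS => _ H _ _; apply: H. Qed.

Lemma neg_in b : b \in Phi -> - b \in Phi.
Proof. by move=> bP; rewrite -refl_self ?notin0 // refl_in. Qed.

Lemma word_in s b : b \in Phi -> wordprod alpha s *m b \in Phi.
Proof.
elim: s => [|j s IH] bP; first by rewrite /wordprod /= mul1mx.
by rewrite /wordprod /= -mulmxA refl_in ?alpha_in // IH.
Qed.

Lemma indep (c d : 'I_r -> R) :
  \sum_k c k *: alpha k = \sum_k d k *: alpha k -> forall k, c k = d k.
Proof.
move=> E k; case: BS => _ H _; apply/eqP; rewrite -subr_eq0; apply/eqP.
apply: (H (fun k => c k - d k)).
by rewrite (eq_bigr (fun k => c k *: alpha k - d k *: alpha k)) ?sumrB ?E ?subrr // => l _; rewrite scalerBl.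
Qed.

Lemma pos_posR b : posroot Phi alpha b -> posR b.
Proof. by case=> _ [c [c0 ->]]; exists (fun k => (c k)%:~R); split => // k; rewrite ler0z. Qed.

Lemma posR_excl v : posR v -> posR (- v) -> v = 0.
Proof.
move=> [c [c0 Ec]] [d [d0 Ed]].
have E : \sum_k (c k + d k) *: alpha k = \sum_k (0 : R) *: alpha k.
  rewrite (eq_bigr (fun k => c k *: alpha k + d k *: alpha k)) ?big_split /=; last by move=> k _; rewrite scalerDl.
  by rewrite -Ec -Ed subrr big1 // => k _; rewrite scale0r.
have ck k : c k = 0.
  by have /eqP := indep E k; rewrite paddr_eq0 // => /andP [/eqP].
by rewrite Ec big1 // => k _; rewrite ck scale0r.
Qed.

Lemma dichot b : b \in Phi -> posroot Phi alpha b \/ negroot Phi alpha b.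
Proof.
move=> bP; case: BS => _ _ /(_ b bP) [c [Ec [H|H]]].
  by left; split => //; exists c.
right; split; first exact: neg_in.
exists (fun k => - c k); split; first by move=> k; rewrite oppr_ge0.
by rewrite Ec -sumrN; apply: eq_bigr => k _; rewrite -scaleNr mulrNz.
Qed.

Lemma not_both b : b \in Phi -> posroot Phi alpha b -> negroot Phi alpha b -> False.
Proof.
move=> bP /pos_posR P1 /pos_posR P2; have := posR_excl P1 P2.
by move/eqP; rewrite (negPf (notin0 bP)).
Qed.

Lemma sum_delta j (t : R) : \sum_k (if k == j then t else 0) *: alpha k = t *: alpha j.
Proof.
rewrite (bigD1 j) //= eqxx big1 ?addr0 // => k /negPf ->; by rewrite scale0r.
Qed.

Lemma alpha_pos j : posroot Phi alpha (alpha j).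
Proof.
split; first exact: alpha_in.
exists (fun k => if k == j then 1 else 0); split; first by move=> k; case: ifP.
rewrite -[LHS]scale1r -sum_delta; apply: eq_bigr => k _; by case: ifP.
Qed.

Lemma simple_perm j b : b \in Phi -> posroot Phi alpha b -> b != alpha j ->
  posroot Phi alpha (refl (alpha j) *m b).
Proof.
move=> bP bpos bne.
have sbP : refl (alpha j) *m b \in Phi by rewrite refl_in ?alpha_in.
case: (dichot sbP) => // /pos_posR [d [d0 Ed]].
have [_ [c [c0 Ec]]] := bpos.
set t := 2 * dotv (alpha j) b / dotv (alpha j) (alpha j).
have Es : refl (alpha j) *m b = b - t *: alpha j by rewrite refl_mul.
have E : \sum_k ((c k)%:~R + d k) *: alpha k = \sum_k (if k == j then t else 0) *: alpha k.
  rewrite sum_delta (eq_bigr (fun k => (c k)%:~R *: alpha k + d k *: alpha k)) ?big_split /=; last by move=> k _; rewrite scalerDl.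
  by rewrite -Ec -Ed Es opprB addrC subrK.
have ck k : k != j -> c k = 0.
  move=> kj; have := indep E k; rewrite (negPf kj) => /eqP.
  by rewrite paddr_eq0 ?ler0z // intr_eq0 => /andP [/eqP].
have Eb : b = (c j)%:~R *: alpha j.
  by rewrite Ec (bigD1 j) //= big1 ?addr0 // => k /ck ->; rewrite scale0r.
case: RS => _ _ _ /(_ (alpha j) ((c j)%:~R) (alpha_in j)); rewrite -Eb => /(_ bP) [] E1.
  by move: bne; rewrite Eb E1 scale1r eqxx.
by have := c0 j; rewrite -(ler0z R) E1 oppr_ge0 ler10.
Qed.

Lemma wp_cons j s : wordprod alpha (j :: s) = refl (alpha j) *m wordprod alpha s.
Proof. by []. Qed.

Lemma wp_nil : wordprod alpha [::] = 1%:M.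
Proof. by []. Qed.

Lemma exchange s j : negroot Phi alpha (wordprod alpha s *m alpha j) ->
  exists s', (size s' < size s)%N /\ wordprod alpha s *m refl (alpha j) = wordprod alpha s'.
Proof.
elim: s => [|k s IH].
  rewrite wp_nil mul1mx => H; exfalso; exact: not_both (alpha_in j) (alpha_pos j) H.
rewrite wp_cons => H.
have bP : wordprod alpha s *m alpha j \in Phi by rewrite word_in ?alpha_in.
case: (dichot bP) => [bpos|bneg].
  have E : wordprod alpha s *m alpha j = alpha k.
    apply/eqP; apply/negPn/negP => bne.
    have := simple_perm bP bpos bne; rewrite mulmxA => P.
    apply: not_both P H; rewrite -mulmxA refl_in ?alpha_in //.
  exists s; split => //.
  rewrite -E refl_conj ?(wordprod_orth anz) //.
  rewrite -!mulmxA (mulmxA (wordprod alpha s)^T) (wordprod_orth anz) mul1mx.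
  by rewrite refl_invol ?anz // mulmx1.
have [s' [Hs Es]] := IH bneg.
by exists (k :: s'); split => //; rewrite wp_cons -mulmxA Es.
Qed.

Lemma posR0 : posR 0.
Proof. by exists (fun=> 0); split => //; rewrite big1 // => k _; rewrite scale0r. Qed.

Lemma posRD x y : posR x -> posR y -> posR (x + y).
Proof.
move=> [c [c0 ->]] [d [d0 ->]]; exists (fun k => c k + d k); split.
  by move=> k; rewrite addr_ge0.
by rewrite -big_split /=; apply: eq_bigr => k _; rewrite scalerDl.
Qed.

Lemma posRZ t x : 0 <= t -> posR x -> posR (t *: x).
Proof.
move=> t0 [c [c0 ->]]; exists (fun k => t * c k); split.
  by move=> k; rewrite mulr_ge0.
by rewrite scaler_sumr; apply: eq_bigr => k _; rewrite scalerA.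
Qed.

Lemma neg_all s : (forall j, negroot Phi alpha (wordprod alpha s *m alpha j)) ->
  forall b, posroot Phi alpha b -> negroot Phi alpha (wordprod alpha s *m b).
Proof.
move=> Hn b bpos; have bP : b \in Phi by case: bpos.
have UbP : wordprod alpha s *m b \in Phi by rewrite word_in.
case: (dichot UbP) => // Hp; exfalso.
have [_ [c [c0 Ec]]] := bpos.
have : posR (- (wordprod alpha s *m b)).
  rewrite Ec mulmx_sumr -sumrN; apply: (big_ind posR) => //.
  - exact: posR0.
  - exact: posRD.
  move=> k _; rewrite -scalemxAr -scalerN; apply: posRZ; first by rewrite ler0z.
  exact: pos_posR (Hn k).
move=> /(posR_excl (pos_posR Hp)) /eqP; by rewrite (negPf (notin0 UbP)).
Qed.

Lemma pos_one m s : (size s <= m)%N ->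
  (forall j, posroot Phi alpha (wordprod alpha s *m alpha j)) -> wordprod alpha s = 1%:M.
Proof.
elim: m s => [|m IH] s.
  by rewrite leqn0 => /nilP ->.
case/lastP: s => [|s j] //.
rewrite size_rcons ltnS => Hs Hp.
have Hneg : negroot Phi alpha (wordprod alpha s *m alpha j).
  have := Hp j; rewrite wordprod_rcons -mulmxA refl_self ?anz // mulmxN.
  by rewrite /negroot.
have [s' [Hs' Es']] := exchange Hneg.
rewrite wordprod_rcons Es'; apply: IH; first exact: ltnW (leq_trans Hs' Hs).
by move=> k; rewrite -Es' -wordprod_rcons.
Qed.

Lemma neg_max N (i : nat -> 'I_r) : longest_reduced_word alpha N i ->
  forall j, negroot Phi alpha (w0_of alpha N i *m alpha j).
Proof.
move=> [Hred Hmax] j.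
have bP : w0_of alpha N i *m alpha j \in Phi by rewrite word_in ?alpha_in.
case: (dichot bP) => // bpos; exfalso.
have [s [Hs Es]] : exists s, (size s <= N)%N /\ w0_of alpha N i *m refl (alpha j) = wordprod alpha s.
  apply: Hmax; exists (rcons [seq i j | j <- iota 1 N] j).
  by rewrite wordprod_rcons.
have Hneg : negroot Phi alpha (wordprod alpha s *m alpha j).
  rewrite -Es -mulmxA refl_self ?anz // mulmxN /negroot opprK.
  by [].
have [s' [Hs' Es']] := exchange Hneg.
rewrite -Es -mulmxA refl_invol ?anz // mulmx1 in Es'.
have := Hred s' (esym Es'); rewrite leqNgt => /negP; apply.
exact: leq_trans Hs' Hs.
Qed.

Lemma w0_invol N (i : nat -> 'I_r) : longest_reduced_word alpha N i ->
  w0_of alpha N i *m w0_of alpha N i = 1%:M.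
Proof.
move=> L; set w := [seq i j | j <- iota 1 N].
have -> : w0_of alpha N i *m w0_of alpha N i = wordprod alpha (w ++ w) by rewrite wordprod_cat.
apply: (@pos_one (size (w ++ w))) => // j.
rewrite wordprod_cat -mulmxA.
have H1 := neg_max L j.
have := neg_all (neg_max L) H1; rewrite mulmxN /negroot opprK.
by [].
Qed.
End Roots.

Lemma tailprod_succ (R : realFieldType) (n r : nat) (alpha : 'I_r -> 'cV[R]_n) N i k :
  (k <= N)%N -> tailprod alpha N i k = tailprod alpha N i k.+1 *m refl (alpha (i k)).
Proof.
move=> kN; rewrite /tailprod subSS subSn //= rev_cons map_rcons.
by rewrite -cats1 wordprod_cat /wordprod /= mulmx1.
Qed.

Lemma tailprod_last (R : realFieldType) (n r : nat) (alpha : 'I_r -> 'cV[R]_n) N i :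
  tailprod alpha N i N.+1 = 1%:M.
Proof. by rewrite /tailprod subnn. Qed.

Lemma tailprod_first (R : realFieldType) (n r : nat) (alpha : 'I_r -> 'cV[R]_n) N i :
  tailprod alpha N i 1 = wordprod alpha (rev [seq i j | j <- iota 1 N]).
Proof. by rewrite /tailprod subn1 map_rev. Qed.

Theorem mainTheorem3 (R : realFieldType) (n r : nat)
  (Phi : seq 'cV[R]_n) (alpha : 'I_r -> 'cV[R]_n)
  (N : nat) (i : nat -> 'I_r) (w' : 'M[R]_n)
  (c : nat -> ycls) (pi sigma : nat -> 'M[R]_n) :
  root_system Phi -> irreducible_rs Phi -> is_base Phi alpha ->
  longest_reduced_word alpha N i ->
  inW alpha w' ->
  pi N.+1 = w' -> sigma N.+1 = w' ->
  (forall k, (1 <= k <= N)%N -> step_rel Phi alpha N i c pi sigma k) ->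
  (forall k, (1 <= k <= N.+1)%N -> pi k = tailprod alpha N i k *m sigma k) /\
  pi 1%N = w0_of alpha N i *m sigma 1%N.
Proof.
move=> RS _ BS L Hw' Hpi Hsig Hstep.
have AN := anz RS BS.
pose P k := pi k = tailprod alpha N i k *m sigma k /\ inW alpha (sigma k).
have PN : P N.+1 by rewrite /P tailprod_last mul1mx Hpi Hsig.
have step k : (1 <= k <= N)%N -> P k.+1 -> P k.
  move=> /andP [k1 kN] [Hp [s Hs]].
  have [HA HB] := Hstep k (introT andP (conj k1 kN)).
  set T := tailprod alpha N i k.+1.
  have Tw : T = wordprod alpha [seq i j | j <- rev (iota k.+1 (N.+1 - k.+1))] by [].
  have TO : T^T *m T = 1%:M by rewrite Tw (wordprod_orth AN).
  have caseA : typeA Phi alpha N i c pi k -> P k.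
    move=> /HA [E1 E2]; rewrite /P E1 E2; split; last by exists s.
    rewrite /gamma -/T refl_conj // Hp [tailprod _ _ _ k]tailprod_succ // -/T.
    by rewrite -!mulmxA (mulmxA T^T) TO mul1mx.
  have caseB : typeB Phi alpha N i c pi k -> P k.
    move=> /HB [E1 E2]; rewrite /P E1 E2; split; last by exists (i k :: s); rewrite Hs.
    rewrite Hp [tailprod _ _ _ k]tailprod_succ // -/T -!mulmxA (mulmxA (refl _)).
    by rewrite refl_invol ?AN // mul1mx.
  case E : (c k).
  - by apply: caseA; left.
  - have xP : invmx (pi k.+1) *m gamma alpha N i k \in Phi.
      rewrite Hp Hs /tailprod -wordprod_cat (invmx_wordprod AN) /gamma /tailprod mulmxA -wordprod_cat.
      by rewrite word_in ?alpha_in.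
    case: (dichot RS BS xP) => H.
      by apply: caseB; right.
    by apply: caseA; right.
  - by apply: caseB; left.
have Pall m : (m <= N)%N -> P (N.+1 - m)%N.
  elim: m => [|m IH] mN; first by rewrite subn0.
  have -> : (N.+1 - m.+1 = (N.+1 - m).-1)%N by rewrite subnS.
  have mN' : (m < N.+1)%N by apply: leqW.
  have g0 : (0 < N.+1 - m)%N by rewrite subn_gt0.
  apply: step; last by rewrite prednK //; apply: IH; apply: ltnW.
  by apply/andP; split; lia.
have main k : (1 <= k <= N.+1)%N -> P k.
  move=> /andP [k1 kN]; have H : (N.+1 - k <= N)%N by lia.
  by have := Pall _ H; rewrite subKn.
split; first by move=> k /main [].
have [-> _] := main 1%N isT.
rewrite tailprod_first; congr (_ *m _).
have I := w0_invol RS BS L.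
rewrite -[LHS]mulmx1 -I mulmxA.
by rewrite /w0_of (wordprod_rev_mul AN) mul1mx.
Qed.
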